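(* Let $\mathbb F$ be a field, $n\ge1$, and for $X,Y\in\mathbb F^{n\times n}$ define the $5n\times5n$ block matrices (with $n\times n$ blocks) $$J=\begin{bmatrix}0&I_n&0&0&0\\0&0&I_n&0&0\\0&0&0&I_n&0\\0&0&0&0&0\\0&0&0&0&0\end{bmatrix},\qquad K_{XY}=\begin{bmatrix}0&0&X&0&Y\\0&0&0&X&0\\0&0&0&0&0\\0&0&0&0&0\\0&0&0&I_n&0\end{bmatrix}.$$ Then $J$ and $K_{XY}$ are nilpotent and commute, and for all $X,Y,X',Y'\in\mathbb F^{n\times n}$: the pairs $(X,Y)$ and $(X',Y')$ are similar if and only if the pairs $(J,K_{XY})$ and $(J,K_{X'Y'})$ are similar.
   Context: Two pairs $(M,N)$, $(M',N')$ of square matrices of the same size are similar if $(S^{-1}MS,S^{-1}NS)=(M',N')$ for some nonsingular $S$. *)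

(* Defs.v *)
From HB Require Import structures.
From mathcomp Require Import all_boot all_order all_algebra.
Set Implicit Arguments. Unset Strict Implicit. Unset Printing Implicit Defensive.
Import GRing.Theory.
Local Open Scope ring_scope.

Definition pair_similar (F : fieldType) (m : nat) (M N M' N' : 'M[F]_m) : Prop :=
  exists2 S : 'M[F]_m, S \in unitmx &
    invmx S *m M *m S = M' /\ invmx S *m N *m S = N'.

Definition mxpow (F : fieldType) (m : nat) (A : 'M[F]_m) (k : nat) : 'M[F]_m :=
  iter k (mulmx A) 1%:M.

Definition nilpotent_mx (F : fieldType) (m : nat) (A : 'M[F]_m) : Prop :=
  exists k, mxpow A k = 0.

(* A (5n)x(5n) matrix given by a 5x5 array of nxn blocks: entry (i,j) lies in
   block (i %/ n, j %/ n) at position (i %% n, j %% n). *)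
Definition block5 (F : fieldType) (n : nat)
  (B : nat -> nat -> 'M[F]_n) : 'M[F]_(5 * n) :=
  \matrix_(i < 5 * n, j < 5 * n)
     match @insub _ (fun k => k < n)%N 'I_n (i %% n)%N,
           @insub _ (fun k => k < n)%N 'I_n (j %% n)%N with
     | Some i', Some j' => B (i %/ n)%N (j %/ n)%N i' j'
     | _, _ => 0   (* unreachable when n > 0, since i %% n < n *)
     end.

Definition Jmx (F : fieldType) (n : nat) : 'M[F]_(5 * n) :=
  block5 (fun a b =>
    if [|| (a == 0) && (b == 1), (a == 1) && (b == 2) | (a == 2) && (b == 3)]%N
    then 1%:M else 0).

Definition Kmx (F : fieldType) (n : nat) (X Y : 'M[F]_n) : 'M[F]_(5 * n) :=
  block5 (fun a b =>
    if ((a == 0) && (b == 2))%N then X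
    else if ((a == 0) && (b == 4))%N then Y
    else if ((a == 1) && (b == 3))%N then X
    else if ((a == 4) && (b == 3))%N then 1%:M
    else 0).

(* Main.v *)
Require Import Defs.
From HB Require Import structures.
From mathcomp Require Import all_boot all_order all_algebra.
From mathcomp Require Import ring zify.
Set Implicit Arguments. Unset Strict Implicit. Unset Printing Implicit Defensive.
Import GRing.Theory.
Local Open Scope ring_scope.

Definition PP (F : fieldType) (n a : nat) : 'M[F]_(5 * n, n) :=
  \matrix_(i, k) (((i %/ n)%N == a)%:R * ((i %% n)%N == k :> nat)%:R).
Definition RR (F : fieldType) (n a : nat) : 'M[F]_(n, 5 * n) :=
  \matrix_(k, i) (((i %/ n)%N == a)%:R * ((i %% n)%N == k :> nat)%:R).

Definition ordm (n : nat) (hn : (0 < n)%N) (i : 'I_(5 * n)) : 'I_n :=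
  Ordinal (ltn_pmod i hn).

Lemma sum_ind (F : fieldType) n (hn : (0 < n)%N) (i : 'I_(5 * n)) (f : 'I_n -> F) :
  \sum_(k : 'I_n) ((i %% n)%N == k :> nat)%:R * f k = f (ordm hn i).
Proof.
rewrite (bigD1 (ordm hn i)) //= eqxx mul1r big1 ?addr0 // => k hk.
suff -> : ((i %% n)%N == k) = false by rewrite mul0r.
apply/negbTE; apply: contra hk => /eqP e; apply/eqP/val_inj; by rewrite /= e.
Qed.

Lemma PMR_entry (F : fieldType) n (hn : (0 < n)%N) a b (M : 'M[F]_n) i j :
  (PP F n a *m M *m RR F n b) i j =
  ((i %/ n)%N == a)%:R * ((j %/ n)%N == b)%:R * M (ordm hn i) (ordm hn j).
Proof.
rewrite mxE.
transitivity (\sum_(l : 'I_n) (((i %/ n)%N == a)%:R * ((j %/ n)%N == b)%:R) *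
    (((j %% n)%N == l :> nat)%:R * M (ordm hn i) l)).
  apply: eq_bigr => l _; rewrite !mxE.
  transitivity (((i %/ n)%N == a)%:R * (\sum_(k : 'I_n) ((i %% n)%N == k :> nat)%:R * M k l) *
                  (((j %/ n)%N == b)%:R * ((j %% n)%N == l :> nat)%:R)).
    congr (_ * _); rewrite big_distrr; apply: eq_bigr => k _; by rewrite !mxE -mulrA.
  rewrite (sum_ind hn i (fun k => M k l)); ring.
by rewrite -big_distrr (sum_ind hn j (fun l => M (ordm hn i) l)).
Qed.

Lemma block5E (F : fieldType) n (hn : (0 < n)%N) (B : nat -> nat -> 'M[F]_n) i j :
  block5 B i j = B (i %/ n)%N (j %/ n)%N (ordm hn i) (ordm hn j).
Proof.
rewrite mxE; case: insubP => [i' _ Hi'|]; last by rewrite ltn_pmod.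
case: insubP => [j' _ Hj'|]; last by rewrite ltn_pmod.
by congr (B _ _ _ _); apply: val_inj.
Qed.

Lemma divmod_uniq n (hn : (0 < n)%N) (i : 'I_(5 * n)) a k :
  (k < n)%N -> ((i %/ n)%N == a) && ((i %% n)%N == k) = (i == a * n + k :> nat).
Proof.
move=> hk; apply/andP/eqP => [[/eqP <- /eqP <-]|->]; first exact: divn_eq.
by rewrite divnMDl // divn_small // addn0 modnMDl modn_small.
Qed.

Lemma RP (F : fieldType) n (hn : (0 < n)%N) a b : (a < 5)%N ->
  RR F n a *m PP F n b = if a == b then 1%:M else 0.
Proof.
move=> ha; apply/matrixP => k l; rewrite mxE.
have hi0 : (a * n + k < 5 * n)%N by have := ltn_ord k; nia.
rewrite (bigD1 (Ordinal hi0)) //= big1.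
  rewrite !mxE /= divnMDl // divn_small // addn0 modnMDl modn_small // eqxx.
rewrite eqxx mul1r mul1r addr0.
  have [_|nab] := eqVneq a b; rewrite ?eqxx ?mul1r ?mxE //.
  by rewrite mul0r.

move=> i hi; rewrite !mxE.
have := divmod_uniq hn i a (ltn_ord k).
case: eqVneq => ea; case: eqVneq => ek /= h; rewrite /= ?mul0r ?mulr0 //; last by rewrite mul0r.
by rewrite -val_eqE /= -h in hi.
Qed.

Lemma PR_entry (F : fieldType) n (hn : (0 < n)%N) a b i j :
  (PP F n a *m RR F n b) i j =
  ((i %/ n)%N == a)%:R * ((j %/ n)%N == b)%:R * (ordm hn i == ordm hn j)%:R.
Proof. by rewrite -[PP F n a]mulmx1 (PMR_entry hn) mxE. Qed.

Lemma eq_divmod n (hn : (0 < n)%N) (i j : 'I_(5 * n)) :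
  (i == j) = ((i %/ n)%N == (j %/ n)%N) && (ordm hn i == ordm hn j).
Proof.
apply/eqP/andP => [->|[/eqP e1 /eqP e2]]; first by [].
apply: val_inj; rewrite /= (divn_eq i n) (divn_eq j n) e1.
by have := congr1 val e2 => /= ->.
Qed.

Lemma addE (F : fieldType) m p (A B : 'M[F]_(m, p)) i j : (A + B) i j = A i j + B i j.
Proof. by rewrite mxE. Qed.

Lemma div5 n (hn : (0 < n)%N) (i : 'I_(5 * n)) : (i %/ n < 5)%N.
Proof. by rewrite ltn_divLR // mulnC. Qed.

Lemma sumPR (F : fieldType) n (hn : (0 < n)%N) :
  PP F n 0 *m RR F n 0 + PP F n 1 *m RR F n 1 + PP F n 2 *m RR F n 2 +
  PP F n 3 *m RR F n 3 + PP F n 4 *m RR F n 4 = 1%:M.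
Proof.
apply/matrixP => i j; rewrite !addE !(@PR_entry F n hn) mxE (eq_divmod hn).
move: (i %/ n)%N (j %/ n)%N (ordm hn i == ordm hn j) (div5 hn i) => a b c ha.
case: a ha => [|[|[|[|[|a]]]]] // _; case: b => [|[|[|[|[|b]]]]]; case: c;
  rewrite /= ?mul1r ?mul0r ?mulr0 ?addr0 ?add0r //.
Qed.

Lemma JE0 (F : fieldType) n (hn : (0 < n)%N) :
  Jmx F n = PP F n 0 *m 1%:M *m RR F n 1 + PP F n 1 *m 1%:M *m RR F n 2 +
            PP F n 2 *m 1%:M *m RR F n 3.
Proof.
apply/matrixP => i j; rewrite /Jmx (block5E hn) !addE !(@PMR_entry F n hn).
move: (i %/ n)%N (j %/ n)%N (div5 hn i) => a b ha.
case: a ha => [|[|[|[|[|a]]]]] // _; case: b => [|[|[|[|[|b]]]]];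
  rewrite /= ?mxE ?mul1r ?mul0r ?mulr0 ?addr0 ?add0r //.
Qed.

Lemma KE0 (F : fieldType) n (hn : (0 < n)%N) (X Y : 'M[F]_n) :
  Kmx X Y = PP F n 0 *m X *m RR F n 2 + PP F n 0 *m Y *m RR F n 4 +
            PP F n 1 *m X *m RR F n 3 + PP F n 4 *m 1%:M *m RR F n 3.
Proof.
apply/matrixP => i j; rewrite /Kmx (block5E hn) !addE !(@PMR_entry F n hn).
move: (i %/ n)%N (j %/ n)%N (div5 hn i) => a b ha.
case: a ha => [|[|[|[|[|a]]]]] // _; case: b => [|[|[|[|[|b]]]]];
  rewrite /= ?mxE ?mul1r ?mul0r ?mulr0 ?addr0 ?add0r //.
Qed.

Lemma RPl (F : fieldType) n (hn : (0 < n)%N) a b p (M : 'M[F]_(p, n)) : (a < 5)%N ->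
  M *m RR F n a *m PP F n b = if a == b then M else 0.
Proof. by move=> ha; rewrite -mulmxA RP //; case: eqP => _; rewrite ?mulmx1 ?mulmx0. Qed.

Lemma JE (F : fieldType) n (hn : (0 < n)%N) :
  Jmx F n = PP F n 0 *m RR F n 1 + PP F n 1 *m RR F n 2 + PP F n 2 *m RR F n 3.
Proof. by rewrite (JE0 _ hn) !mulmx1. Qed.

Lemma KE (F : fieldType) n (hn : (0 < n)%N) (X Y : 'M[F]_n) :
  Kmx X Y = PP F n 0 *m X *m RR F n 2 + PP F n 0 *m Y *m RR F n 4 +
            PP F n 1 *m X *m RR F n 3 + PP F n 4 *m RR F n 3.
Proof. by rewrite (KE0 hn) !mulmx1. Qed.

Ltac simp hn := rewrite ?mulmxDl ?mulmxDr ?mulmxA ?(@RPl _ _ hn) ?(@RP _ _ hn) //=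
  ?mulmx1 ?mul1mx ?mulmx0 ?mul0mx ?addr0 ?add0r.


Lemma JP0 (F : fieldType) n (hn : (0 < n)%N) :
  Jmx F n *m PP F n 0 = 0.
Proof. by rewrite (JE _ hn); simp hn. Qed.

Lemma JP1 (F : fieldType) n (hn : (0 < n)%N) :
  Jmx F n *m PP F n 1 = PP F n 0.
Proof. by rewrite (JE _ hn); simp hn. Qed.

Lemma JP2 (F : fieldType) n (hn : (0 < n)%N) :
  Jmx F n *m PP F n 2 = PP F n 1.
Proof. by rewrite (JE _ hn); simp hn. Qed.

Lemma JP3 (F : fieldType) n (hn : (0 < n)%N) :
  Jmx F n *m PP F n 3 = PP F n 2.
Proof. by rewrite (JE _ hn); simp hn. Qed.

Lemma JP4 (F : fieldType) n (hn : (0 < n)%N) :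
  Jmx F n *m PP F n 4 = 0.
Proof. by rewrite (JE _ hn); simp hn. Qed.

Lemma RJ0 (F : fieldType) n (hn : (0 < n)%N) :
  RR F n 0 *m Jmx F n = RR F n 1.
Proof. by rewrite (JE _ hn); simp hn. Qed.

Lemma RJ1 (F : fieldType) n (hn : (0 < n)%N) :
  RR F n 1 *m Jmx F n = RR F n 2.
Proof. by rewrite (JE _ hn); simp hn. Qed.

Lemma RJ2 (F : fieldType) n (hn : (0 < n)%N) :
  RR F n 2 *m Jmx F n = RR F n 3.
Proof. by rewrite (JE _ hn); simp hn. Qed.

Lemma RJ3 (F : fieldType) n (hn : (0 < n)%N) :
  RR F n 3 *m Jmx F n = 0.
Proof. by rewrite (JE _ hn); simp hn. Qed.

Lemma RJ4 (F : fieldType) n (hn : (0 < n)%N) :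
  RR F n 4 *m Jmx F n = 0.
Proof. by rewrite (JE _ hn); simp hn. Qed.

Lemma KP0 (F : fieldType) n (hn : (0 < n)%N) (X Y : 'M[F]_n) :
  Kmx X Y *m PP F n 0 = 0.
Proof. by rewrite (KE hn); simp hn. Qed.

Lemma KP1 (F : fieldType) n (hn : (0 < n)%N) (X Y : 'M[F]_n) :
  Kmx X Y *m PP F n 1 = 0.
Proof. by rewrite (KE hn); simp hn. Qed.

Lemma KP2 (F : fieldType) n (hn : (0 < n)%N) (X Y : 'M[F]_n) :
  Kmx X Y *m PP F n 2 = PP F n 0 *m X.
Proof. by rewrite (KE hn); simp hn. Qed.

Lemma KP3 (F : fieldType) n (hn : (0 < n)%N) (X Y : 'M[F]_n) :
  Kmx X Y *m PP F n 3 = PP F n 1 *m X + PP F n 4.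
Proof. by rewrite (KE hn); simp hn. Qed.

Lemma KP4 (F : fieldType) n (hn : (0 < n)%N) (X Y : 'M[F]_n) :
  Kmx X Y *m PP F n 4 = PP F n 0 *m Y.
Proof. by rewrite (KE hn); simp hn. Qed.

Lemma RK0 (F : fieldType) n (hn : (0 < n)%N) (X Y : 'M[F]_n) :
  RR F n 0 *m Kmx X Y = X *m RR F n 2 + Y *m RR F n 4.
Proof. by rewrite (KE hn); simp hn. Qed.

Lemma RK4 (F : fieldType) n (hn : (0 < n)%N) (X Y : 'M[F]_n) :
  RR F n 4 *m Kmx X Y = RR F n 3.
Proof. by rewrite (KE hn); simp hn. Qed.

Lemma part_nil (F : fieldType) n (hn : (0 < n)%N) (X Y : 'M[F]_n) :
  nilpotent_mx (Jmx F n) /\ nilpotent_mx (Kmx X Y) /\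
  Jmx F n *m Kmx X Y = Kmx X Y *m Jmx F n.
Proof.
split; [|split].
- exists 4%N; rewrite /mxpow /= mulmx1.
  have J2 : Jmx F n *m Jmx F n = PP F n 0 *m RR F n 2 + PP F n 1 *m RR F n 3.
    by rewrite {2}(JE _ hn) !mulmxDr !mulmxA (JP0 _ hn) (JP1 _ hn) (JP2 _ hn) mul0mx add0r.
  rewrite J2 mulmxDr !mulmxA (JP0 _ hn) (JP1 _ hn) mul0mx add0r.
  by rewrite !mulmxA (JP0 _ hn) mul0mx.
- exists 3%N; rewrite /mxpow /= mulmx1.
  have K2 : Kmx X Y *m Kmx X Y = PP F n 0 *m Y *m RR F n 3.
    by rewrite {2}(KE hn) !mulmxDr !mulmxA (KP0 hn) (KP1 hn) (KP4 hn) !mul0mx !add0r.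
  by rewrite K2 !mulmxA (KP0 hn) !mul0mx.
- rewrite (KE hn) !mulmxDr !mulmxDl !mulmxA (JP0 _ hn) (JP1 _ hn) (JP4 _ hn).
  by rewrite -!mulmxA (RJ2 _ hn) (RJ3 _ hn) (RJ4 _ hn) !mulmx0 !mul0mx !addr0 !add0r.
Qed.

Lemma part_fwd (F : fieldType) n (hn : (0 < n)%N) (X Y X' Y' : 'M[F]_n) :
  pair_similar X Y X' Y' ->
  pair_similar (Jmx F n) (Kmx X Y) (Jmx F n) (Kmx X' Y').
Proof.
move=> [S hS [eX eY]].
have XS : X *m S = S *m X' by rewrite -eX !mulmxA mulmxV // mul1mx.
have YS : Y *m S = S *m Y' by rewrite -eY !mulmxA mulmxV // mul1mx.
pose D := PP F n 0 *m S *m RR F n 0 + PP F n 1 *m S *m RR F n 1 +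
  PP F n 2 *m S *m RR F n 2 + PP F n 3 *m S *m RR F n 3 + PP F n 4 *m S *m RR F n 4.
pose D' := PP F n 0 *m invmx S *m RR F n 0 + PP F n 1 *m invmx S *m RR F n 1 +
  PP F n 2 *m invmx S *m RR F n 2 + PP F n 3 *m invmx S *m RR F n 3 +
  PP F n 4 *m invmx S *m RR F n 4.
have hD : D *m D' = 1%:M.
  rewrite /D /D'; simp hn; rewrite !mulmxK //; exact: sumPR.
have [hDu _] := mulmx1_unit hD.
exists D => //; split.
- have JD : Jmx F n *m D = D *m Jmx F n by rewrite /D (JE _ hn); simp hn.
  by rewrite -mulmxA JD mulKmx.
- have KD : Kmx X Y *m D = D *m Kmx X' Y'.
    rewrite /D !(KE hn); simp hn.
    rewrite -(mulmxA (PP F n 0) X S) -(mulmxA (PP F n 0) Y S).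
    by rewrite -(mulmxA (PP F n 1) X S) XS YS !mulmxA.
  by rewrite -mulmxA KD mulKmx.
Qed.

Lemma part_bwd (F : fieldType) n (hn : (0 < n)%N) (X Y X' Y' : 'M[F]_n) :
  pair_similar (Jmx F n) (Kmx X Y) (Jmx F n) (Kmx X' Y') ->
  pair_similar X Y X' Y'.
Proof.
move=> [T hT [e1 e2]].
have JT : T *m Jmx F n = Jmx F n *m T.
  by rewrite -{1}e1 !mulmxA mulmxV // mul1mx.
have KT : T *m Kmx X' Y' = Kmx X Y *m T.
  by rewrite -{1}e2 !mulmxA mulmxV // mul1mx.
have swapJ : forall a b, RR F n a *m Jmx F n *m T *m PP F n b =
    RR F n a *m T *m (Jmx F n *m PP F n b).
  by move=> a b; rewrite -(mulmxA _ (Jmx F n) T) -JT !mulmxA.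
have swapK : forall a b, RR F n a *m Kmx X Y *m T *m PP F n b =
    RR F n a *m T *m (Kmx X' Y' *m PP F n b).
  by move=> a b; rewrite -(mulmxA _ (Kmx X Y) T) -KT !mulmxA.
pose A := RR F n 0 *m T *m PP F n 0.
have f1 : RR F n 1 *m T *m PP F n 1 = A by rewrite -(RJ0 _ hn) swapJ (JP1 _ hn).
have f2 : RR F n 2 *m T *m PP F n 2 = A by rewrite -(RJ1 _ hn) swapJ (JP2 _ hn).
have f3 : RR F n 3 *m T *m PP F n 3 = A by rewrite -(RJ2 _ hn) swapJ (JP3 _ hn).
have z1 : RR F n 4 *m T *m PP F n 2 = 0.
  by rewrite -(JP3 _ hn) -swapJ (RJ4 _ hn) !mul0mx.
have z2 : RR F n 2 *m T *m PP F n 4 = 0.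
  by rewrite -(RJ1 _ hn) swapJ (JP4 _ hn) mulmx0.
have z3 : RR F n 4 *m T *m PP F n 1 = 0.
  by rewrite -(JP2 _ hn) -swapJ (RJ4 _ hn) !mul0mx.
have f4 : RR F n 4 *m T *m PP F n 4 = A.
  rewrite -f3 -(RK4 hn X Y) swapK (KP3 hn X' Y') mulmxDr mulmxA z3 mul0mx.
  by rewrite add0r.
have hX : X *m A = A *m X'.
  have := swapK 0%N 2%N.
  rewrite (RK0 hn X Y) (KP2 hn X' Y') !mulmxDl -!(mulmxA X) -!(mulmxA Y).
  by rewrite f2 z1 mulmx0 addr0 mulmxA.
have hY : Y *m A = A *m Y'.
  have := swapK 0%N 4%N.
  rewrite (RK0 hn X Y) (KP4 hn X' Y') !mulmxDl -!(mulmxA X) -!(mulmxA Y).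
  by rewrite f4 z2 mulmx0 add0r mulmxA.
have TP0 : T *m PP F n 0 = PP F n 0 *m A.
  have g1 : RR F n 1 *m (T *m PP F n 0) = 0.
    by rewrite mulmxA -(RJ0 _ hn) swapJ (JP0 _ hn) mulmx0.
  have g2 : RR F n 2 *m (T *m PP F n 0) = 0.
    by rewrite mulmxA -(RJ1 _ hn) swapJ (JP0 _ hn) mulmx0.
  have g3 : RR F n 3 *m (T *m PP F n 0) = 0.
    by rewrite mulmxA -(RJ2 _ hn) swapJ (JP0 _ hn) mulmx0.
  have g4 : RR F n 4 *m (T *m PP F n 0) = 0.
    by rewrite -(JP1 _ hn) mulmxA -swapJ (RJ4 _ hn) !mul0mx.
  rewrite -[T *m PP F n 0]mul1mx -(sumPR _ hn) !mulmxDl -!mulmxA g1 g2 g3 g4.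
  by rewrite !mulmx0 !addr0 /A !mulmxA.
have hB : (RR F n 0 *m invmx T *m PP F n 0) *m A = 1%:M.
  rewrite -mulmxA -TP0 !mulmxA -(mulmxA _ (invmx T)) mulVmx // mulmx1.
  by rewrite (RP _ hn) //= eqxx.
have [_ hA] := mulmx1_unit hB.
exists A => //; split.
- by rewrite -mulmxA hX mulKmx.
- by rewrite -mulmxA hY mulKmx.
Qed.

Unset Implicit Arguments.

Theorem mainTheorem3 (F : fieldType) (n : nat) (hn : (1 <= n)%N) :
  nilpotent_mx (Jmx F n) /\
  (forall X Y : 'M[F]_n,
     nilpotent_mx (Kmx X Y) /\ Jmx F n *m Kmx X Y = Kmx X Y *m Jmx F n) /\
  (forall X Y X' Y' : 'M[F]_n,
     pair_similar X Y X' Y' <->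
     pair_similar (Jmx F n) (Kmx X Y) (Jmx F n) (Kmx X' Y')).
Proof.
split; first by have [h _] := part_nil hn (0 : 'M[F]_n) 0.
split; first by move=> X Y; have [_ h] := part_nil hn X Y.
move=> X Y X' Y'; split; [exact: (part_fwd hn) | exact: (part_bwd hn)].
Qed.
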